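(* Let $n,m\in\mathbb{N}$, $f,g:\mathbb{F}_2^n\to\mathbb{F}_2$, $\mathbf{y}\in\mathbb{F}_2^n$, and let $h(\mathbf{x})=\mathbf{x}\cdot\mathbf{y}$. Then: (i) when $A^{(m)3,3}_n(h,f,g)$ is executed, the probability of measuring the all-zero state $\ket{0^n}$ is $2^{-2n}|C^{(m)}_{f,g}(\mathbf{y})|^2$; (ii) when $A^{(m)2,3}_n(h,f,g)$ is executed, the probability of measuring the driving qubit in state $\ket{0}$ is $\frac12\left(1+\Re\left(2^{-n}\zeta_m^{-wt(\mathbf{y})}C^{(m)}_{f,g}(\mathbf{y})\right)\right)$.
   Context: $\zeta_m=e^{2\pi i/m}$, $\overline{\zeta_m}$ its conjugate; $wt$ is Hamming weight; $\mathbf{x}\cdot\mathbf{y}=\bigoplus_i x_iy_i$; $\mathbf{x}\odot\mathbf{y}=\sum_ix_iy_i$ in the integers. $m$-crosscorrelation: $C^{(m)}_{f,g}(\mathbf{y})=\sum_{\mathbf{x}}(-1)^{f(\mathbf{x})\oplus g(\mathbf{x}\oplus\mathbf{y})}(\zeta_m^2)^{\mathbf{x}\odot\mathbf{y}}$. Gates: $\mathrm{H}$ Hadamard; $\Omega_m=\frac{1}{\sqrt2}\begin{pmatrix}1&\zeta_m\\1&-\zeta_m\end{pmatrix}$; $\overline{\Omega}_m=\frac{1}{\sqrt2}\begin{pmatrix}1&\overline{\zeta_m}\\1&-\overline{\zeta_m}\end{pmatrix}$; $\mathrm{S}_m=\mathrm{diag}(1,\zeta_m)$; $U_f$ is the phase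 oracle $\ket{\mathbf{x}}\mapsto(-1)^{f(\mathbf{x})}\ket{\mathbf{x}}$. Algorithm $A^{(m)3,3}_n(f_1,f_2,f_3)$: from $\ket{0^n}$ apply in order $\mathrm{H}^{\otimes n}$, $U_{f_2}$, $\Omega_m^{\otimes n}$, $U_{f_1}$, $\mathrm{H}^{\otimes n}$, $U_{f_3}$, $\overline{\Omega}_m^{\otimes n}$, then measure all qubits. Algorithm $A^{(m)2,3}_n(f_1,f_2,f_3)$: driving qubit in $\ket{+}$, $n$-qubit register in $\ket{0^n}$; apply $\mathrm{H}^{\otimes n}$ to the register; controlled on driving qubit $\ket{0}$ apply $U_{f_2}$, $\Omega_m^{\otimes n}$, $U_{f_1}$, $\mathrm{H}^{\otimes n}$ in order; controlled on driving qubit $\ket{1}$ apply $\mathrm{S}_m^{\otimes n}$, $U_{f_3}$ in order; apply $\mathrm{H}$ to the driving qubit and measure it. *)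

(* Defs.v *)
From HB Require Import structures.
From mathcomp Require Import all_boot all_order all_algebra.
From mathcomp Require Import reals trigo.
From mathcomp Require Import complex.
Set Implicit Arguments. Unset Strict Implicit. Unset Printing Implicit Defensive.
Import Order.TTheory GRing.Theory Num.Theory.
Local Open Scope ring_scope.

Section Quantum.
Variable R : realType.
Local Notation C := R[i].

Definition bv (n : nat) := {ffun 'I_n -> bool}.
Definition bv0 (n : nat) : bv n := [ffun => false].

Definition dotF2 n (x y : bv n) : bool := \big[addb/false]_(i < n) (x i && y i).
Definition dotZ n (x y : bv n) : nat := \sum_(i < n) (x i && y i).
Definition wt n (y : bv n) : nat := \sum_(i < n) y i.

Definition sgnb (b : bool) : C := (-1) ^+ b.

Definition zeta (m : nat) : C := Complex (cos (2 * pi / m%:R)) (sin (2 * pi / m%:R)).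
Definition zetabar (m : nat) : C := conjc (zeta m).

Definition bvxor n (x y : bv n) : bv n := [ffun i => x i (+) y i].

Definition crosscorr (m n : nat) (f g : bv n -> bool) (y : bv n) : C :=
  \sum_(x : bv n) sgnb (f x (+) g (bvxor x y)) * (zeta m ^+ 2) ^+ dotZ x y.

(* a state of an n-qubit register: amplitude of each basis state |x> *)
Definition state n := bv n -> C.

(* a single-qubit gate as a 2x2 matrix: gate1 a b = <a| U |b> *)
Definition gate1 := bool -> bool -> C.

Definition invsqrt2 : C := ((Num.sqrt (2 : R))^-1)%:C%C.

Definition Hg : gate1 := fun a b => invsqrt2 * sgnb (a && b).
Definition Omega (m : nat) : gate1 :=
  fun a b => invsqrt2 * (if b then zeta m else 1) * sgnb (a && b).
Definition Omegabar (m : nat) : gate1 :=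
  fun a b => invsqrt2 * (if b then zetabar m else 1) * sgnb (a && b).
Definition Sg (m : nat) : gate1 :=
  fun a b => if a == b then (if a then zeta m else 1) else 0.

Definition tensor_all n (U : gate1) (psi : state n) : state n :=
  fun x => \sum_(z : bv n) (\prod_(i < n) U (x i) (z i)) * psi z.

Definition oracle n (f : bv n -> bool) (psi : state n) : state n :=
  fun x => sgnb (f x) * psi x.

Definition ket0 (n : nat) : state n := fun x => if x == bv0 n then 1 else 0.

Definition A33_state (m n : nat) (f1 f2 f3 : bv n -> bool) : state n :=
  tensor_all (Omegabar m) (oracle f3 (tensor_all Hg (oracle f1
    (tensor_all (Omega m) (oracle f2 (tensor_all Hg (@ket0 n))))))).

Definition prob_outcome n (psi : state n) (x : bv n) : R := Normc.normc (psi x) ^+ 2.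

(* states of driving qubit (first factor) + n-qubit register *)
Definition dstate n := bool -> state n.

Definition ctrl n (c : bool) (U : state n -> state n) (psi : dstate n) : dstate n :=
  fun b => if b == c then U (psi b) else psi b.

Definition on_reg n (U : state n -> state n) (psi : dstate n) : dstate n :=
  fun b => U (psi b).

Definition H_drive n (psi : dstate n) : dstate n :=
  fun b x => \sum_(c : bool) Hg b c * psi c x.

Definition init_drive (n : nat) : dstate n := fun b => (fun x => invsqrt2 * @ket0 n x).

Definition A23_state (m n : nat) (f1 f2 f3 : bv n -> bool) : dstate n :=
  H_drive
   (ctrl true (fun psi => oracle f3 (tensor_all (Sg m) psi))
     (ctrl false (fun psi => tensor_all Hg (oracle f1 (tensor_all (Omega m) (oracle f2 psi))))
       (on_reg (tensor_all Hg) (@init_drive n)))).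

Definition prob_drive n (psi : dstate n) (c : bool) : R :=
  \sum_(x : bv n) Normc.normc (psi c x) ^+ 2.

End Quantum.

(* Main.v *)
Require Import Defs.
From HB Require Import structures.
From mathcomp Require Import all_boot all_order all_algebra.
From mathcomp Require Import reals trigo.
From mathcomp Require Import complex.
From mathcomp Require Import ring lra.
From Stdlib Require Import FunctionalExtensionality.
Import Order.TTheory GRing.Theory Num.Theory.
Local Open Scope ring_scope.

Section Proof.
Variable R : realType.
Local Notation C := R[i].
Variable n : nat.
Local Notation s := (invsqrt2 R).
Local Notation chi x z := (sgnb R (dotF2 x z)).
Local Notation z := (zeta R _).

Lemma s2 : s * s = 2^-1.
Proof.
rewrite /invsqrt2 -rmorphM -invfM -expr2 sqr_sqrtr ?ler0n //.
by rewrite fmorphV rmorph_nat.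
Qed.

Lemma sn2 : s ^+ n * s ^+ n = 2^-n.
Proof. by rewrite -exprMn s2 exprVn. Qed.

Lemma sn2K : s ^+ n * s ^+ n * 2 ^+ n = 1.
Proof. by rewrite sn2 mulVf // expf_neq0 // pnatr_eq0. Qed.

Lemma sgnb_add a b : sgnb R (a (+) b) = sgnb R a * sgnb R b.
Proof. by case: a; case: b; rewrite /sgnb /= ?expr0 ?expr1 ?mulr1 ?mul1r ?mulrNN ?mulr1. Qed.

Lemma sgnb_dot (x y : bv n) : chi x y = \prod_i sgnb R (x i && y i).
Proof.
rewrite /dotF2; elim/big_rec2: _ => [|i a b _ <-]; first by rewrite /sgnb expr0.
by rewrite sgnb_add.
Qed.

Lemma pow_wt (k : C) (y : bv n) : k ^+ wt y = \prod_i (if y i then k else 1).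
Proof.
rewrite /wt (big_morph (fun n => k ^+ n) (exprD k) (expr0 k)).
by apply: eq_bigr => i _; case: (y i); rewrite ?expr0 ?expr1.
Qed.

Lemma prod_ifeq (a b : bv n) (F : 'I_n -> C) :
  \prod_i (if a i == b i then F i else 0) = if a == b then \prod_i F i else 0.
Proof.
case: eqP => [->|neq]; first by apply: eq_bigr => i _; rewrite eqxx.
have : ~~ [forall i, a i == b i].
  by apply/negP => /forallP H; apply: neq; apply/ffunP => i; apply/eqP/H.
rewrite negb_forall => /existsP [i hi].
by rewrite (bigD1 i) //= (negbTE hi) mul0r.
Qed.

Lemma chiC (x y : bv n) : chi x y = chi y x.
Proof. by rewrite /dotF2; congr sgnb; apply: eq_bigr => i _; rewrite andbC. Qed.

Lemma chiX (x a b : bv n) : chi x (bvxor a b) = chi x a * chi x b.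
Proof.
rewrite !sgnb_dot -big_split /=; apply: eq_bigr => i _; rewrite ffunE.
case: (x i) => /=. by rewrite sgnb_add. by rewrite /sgnb expr0 mulr1.
Qed.

Lemma chi0 (x : bv n) : chi x (bv0 n) = 1.
Proof. by rewrite sgnb_dot big1 // => i _; rewrite ffunE andbF /sgnb expr0. Qed.

Lemma orth (a b : bv n) :
  \sum_x chi x a * chi x b = if a == b then 2 ^+ n else 0.
Proof.
under eq_bigr do rewrite !sgnb_dot -big_split /=.
rewrite -(bigA_distr_bigA (fun i (c : bool) => sgnb R (c && a i) * sgnb R (c && b i))) /=.
rewrite (eq_bigr (fun i => if a i == b i then 2 else 0)).
  by rewrite prod_ifeq prodr_const card_ord.
move=> i _; rewrite big_bool /=.
by case: (a i); case: (b i); rewrite /sgnb /= ?expr0 ?expr1 ?mulr1 ?mul1r ?mulrNN ?mulr1 ?mulN1r ?mulrN1; try ring.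
Qed.

Variable m : nat.
Local Notation ze := (zeta R m).
Local Notation zb := (zetabar R m).

Lemma zz : ze * conjc ze = 1.
Proof.
rewrite /zeta /=; apply/eqP; rewrite eq_complex /=; apply/andP; split; apply/eqP.
  by rewrite mulrN opprK -!expr2 cos2Dsin2.
by ring.
Qed.

Lemma zetabarE : zb = ze^-1.
Proof.
have nz : ze != 0 by apply/eqP => h; move: zz; rewrite h mul0r => /eqP; rewrite eq_sym oner_eq0.
by rewrite /zetabar -[conjc ze]mul1r -(mulVf nz) -mulrA zz mulr1.
Qed.

Lemma prodH (x w : bv n) : \prod_i Hg R (x i) (w i) = s ^+ n * chi x w.
Proof. by rewrite /Hg big_split /= prodr_const card_ord -sgnb_dot. Qed.

Lemma prodOm (x w : bv n) : \prod_i Omega R m (x i) (w i) = s ^+ n * (ze ^+ wt w * chi x w).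
Proof. by rewrite /Omega !big_split /= prodr_const card_ord -pow_wt -sgnb_dot mulrA. Qed.

Lemma prodOmb (x w : bv n) : \prod_i Omegabar R m (x i) (w i) = s ^+ n * (zb ^+ wt w * chi x w).
Proof. by rewrite /Omegabar !big_split /= prodr_const card_ord -pow_wt -sgnb_dot mulrA. Qed.

Lemma prodS (x w : bv n) : \prod_i Sg R m (x i) (w i) = if x == w then ze ^+ wt w else 0.
Proof.
rewrite (eq_bigr (fun i => if x i == w i then (if w i then ze else 1) else 0)).
  by rewrite prod_ifeq -pow_wt.
by move=> i _; rewrite /Sg; case: (x i); case: (w i).
Qed.

Lemma tensH (psi : state R n) : tensor_all (Hg R) psi = fun x => s ^+ n * \sum_w chi x w * psi w.
Proof.
apply: functional_extensionality => x.
by rewrite /tensor_all mulr_sumr; apply: eq_bigr => w _; rewrite prodH mulrA.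
Qed.

Lemma tensOm (psi : state R n) : tensor_all (Omega R m) psi =
   fun x => s ^+ n * \sum_w ze ^+ wt w * chi x w * psi w.
Proof.
apply: functional_extensionality => x.
by rewrite /tensor_all mulr_sumr; apply: eq_bigr => w _; rewrite prodOm !mulrA.
Qed.

Lemma tensOmb (psi : state R n) : tensor_all (Omegabar R m) psi =
   fun x => s ^+ n * \sum_w zb ^+ wt w * chi x w * psi w.
Proof.
apply: functional_extensionality => x.
by rewrite /tensor_all mulr_sumr; apply: eq_bigr => w _; rewrite prodOmb !mulrA.
Qed.

Lemma tensS (psi : state R n) : tensor_all (Sg R m) psi = fun x => ze ^+ wt x * psi x.
Proof.
apply: functional_extensionality => x.
rewrite /tensor_all (bigD1 x) //= prodS eqxx (big1 _ (fun i => i != x)) ?addr0 //.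
by move=> w hw; rewrite prodS eq_sym (negbTE hw) mul0r.
Qed.

Lemma sum_if (a : bv n) (F : bv n -> C) c :
  \sum_v F v * (if a == v then c else 0) = F a * c.
Proof.
rewrite (bigD1 a) //= eqxx big1 ?addr0 // => v hv.
by rewrite eq_sym (negbTE hv) mulr0.
Qed.

Lemma tensH_ket (c : C) : tensor_all (Hg R) (fun x => c * @ket0 R n x) = fun _ => c * s ^+ n.
Proof.
rewrite tensH; apply: functional_extensionality => x.
rewrite (bigD1 (bv0 n)) //= big1 ?addr0.
  by rewrite /ket0 eqxx chi0 mulr1 mul1r mulrC.
by move=> w hw; rewrite /ket0 (negbTE hw) !mulr0.
Qed.

Variable y : bv n.

Lemma stage5 (c : C) (f : bv n -> bool) :
  tensor_all (Hg R) (oracle (fun x => @dotF2 n x y) (tensor_all (Omega R m)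
     (oracle f (tensor_all (Hg R) (fun x => c * @ket0 R n x))))) =
  fun w => c * s ^+ n * (ze ^+ wt (bvxor w y) * sgnb R (f (bvxor w y))).
Proof.
rewrite tensH_ket /oracle tensOm tensH; apply: functional_extensionality => w /=.
transitivity (s ^+ n * (s ^+ n * s ^+ n * c * \sum_v (ze ^+ wt v * sgnb R (f v)) *
   \sum_u chi u (bvxor w y) * chi u v)).
  congr (_ * _).
  under eq_bigr => u _ do rewrite !mulr_sumr.
  rewrite exchange_big /= mulr_sumr; apply: eq_bigr => v _.
  rewrite !mulr_sumr; apply: eq_bigr => u _.
  rewrite chiX (chiC w u); ring.
under eq_bigr do rewrite orth.
rewrite sum_if.
transitivity ((s ^+ n * s ^+ n * 2 ^+ n) * (c * s ^+ n *
  (ze ^+ wt (bvxor w y) * sgnb R (f (bvxor w y))))); first ring.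
by rewrite sn2K mul1r.
Qed.

Lemma zenz : ze != 0.
Proof. by apply/eqP => h; move: zz; rewrite h mul0r => /eqP; rewrite eq_sym oner_eq0. Qed.

Lemma wt_xor (x : bv n) : (wt x + wt y = 2 * dotZ x y + wt (bvxor x y))%N.
Proof.
rewrite /wt /dotZ -big_split /= big_distrr /= -big_split /=.
by apply: eq_bigr => i _; rewrite ffunE; case: (x i); case: (y i).
Qed.

Lemma bvxorK (x : bv n) : bvxor (bvxor x y) y = x.
Proof. by apply/ffunP => i; rewrite !ffunE addbK. Qed.

Lemma bvxor_inj : injective (fun x : bv n => bvxor x y).
Proof. exact: (@can_inj _ _ _ (fun x : bv n => bvxor x y) bvxorK). Qed.

Lemma Klemma (f g : bv n -> bool) :
  \sum_w zb ^+ wt w * sgnb R (g w) * (ze ^+ wt (bvxor w y) * sgnb R (f (bvxor w y)))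
  = ze ^- wt y * crosscorr R m f g y.
Proof.
rewrite (reindex_inj bvxor_inj) /= /crosscorr mulr_sumr; apply: eq_bigr => x _.
rewrite bvxorK sgnb_add zetabarE exprVn -exprM.
have e : ze ^+ wt x = ze ^+ (2 * dotZ x y) * ze ^+ wt (bvxor x y) / ze ^+ wt y.
  by rewrite -exprD -wt_xor exprD mulfK // expf_neq0 // zenz.
rewrite e; field.
by rewrite !expf_neq0 // zenz.
Qed.

Lemma normc2E (u : C) : real_complex (R : rcfType) (Normc.normc u ^+ 2) = u * conjc u.
Proof. by case: u => a b; rewrite -sqr_normc normc_def -rmorphXn. Qed.

Lemma normc2E' (t : R) (u : C) :
  real_complex (R : rcfType) (t * Normc.normc u ^+ 2) = real_complex (R : rcfType) t * (u * conjc u).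
Proof.
case: u => a b /=; rewrite sqr_sqrtr ?addr_ge0 ?sqr_ge0 //.
apply/eqP; rewrite eq_complex /=; apply/andP; split; apply/eqP; ring.
Qed.

Lemma amp33 (f g : bv n -> bool) :
  A33_state R m (fun x => @dotF2 n x y) f g (bv0 n) = 2 ^- n * (ze ^- wt y * crosscorr R m f g y).
Proof.
have k : @ket0 R n = (fun x => 1 * @ket0 R n x).
  by apply: functional_extensionality => x; rewrite mul1r.
rewrite /A33_state k stage5 /oracle tensOmb /= -Klemma -sn2 mulr_sumr.
rewrite mulr_sumr; apply: eq_bigr => w _; rewrite chiC chi0; ring.
Qed.

Lemma part1 (f g : bv n -> bool) :
  prob_outcome (A33_state R m (fun x => @dotF2 n x y) f g) (bv0 n)
    = (2 : R) ^- (2 * n) * Normc.normc (crosscorr R m f g y) ^+ 2.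
Proof.
rewrite /prob_outcome amp33; apply: complexI.
rewrite normc2E normc2E'.
rewrite !(rmorphM, fmorphV, rmorphXn, rmorph_nat).
rewrite -[complex_conjc__canonical__GRing_RMorphism R ze]/(zetabar R m) zetabarE.
rewrite exprVn invrK mul2n -addnn exprD invfM.
set c := crosscorr R m f g y.
set cc := complex_conjc__canonical__GRing_RMorphism R c.
rewrite -/(conjc c).
field.
by rewrite !expf_neq0 // ?zenz // pnatr_eq0.
Qed.

Lemma normc2_re (u : C) : Normc.normc u ^+ 2 = complex.Re (u * conjc u).
Proof. by case: u => a b /=; rewrite sqr_sqrtr ?addr_ge0 ?sqr_ge0 //; ring. Qed.

Lemma ReD (u v : C) : complex.Re (u + v) = complex.Re u + complex.Re v.
Proof. by case: u; case: v. Qed.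

Lemma ReRM (t : R) (u : C) : complex.Re ((t%:C)%C * u) = t * complex.Re u.
Proof. by case: u => a b /=; ring. Qed.

Lemma ReR (t : R) : complex.Re ((t%:C)%C) = t.
Proof. by []. Qed.

Lemma ReJ (u : C) : complex.Re (conjc u) = complex.Re u.
Proof. by case: u. Qed.

Lemma Re_sum (F : bv n -> C) : complex.Re (\sum_x F x) = \sum_x complex.Re (F x).
Proof. by elim/big_rec2: _ => // i a b _ <-; rewrite ReD. Qed.

Lemma conjD (u v : C) : conjc (u + v) = conjc u + conjc v.
Proof. by case: u; case: v => a b c d /=; apply/eqP; rewrite eq_complex /= opprD !eqxx. Qed.

Lemma conj_sum (F : bv n -> C) : conjc (\sum_x F x) = \sum_x conjc (F x).
Proof.
elim/big_rec2: _ => [|i a b _ <-]; last by rewrite conjD.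
by apply/eqP; rewrite eq_complex /= oppr0 !eqxx.
Qed.

Lemma conjM (u v : C) : conjc (u * v) = conjc u * conjc v.
Proof. by case: u; case: v => a b c d /=; apply/eqP; rewrite eq_complex /=; apply/andP; split; apply/eqP; ring. Qed.

Lemma conjR (t : R) : conjc ((t%:C)%C) = (t%:C)%C.
Proof. by apply/eqP; rewrite eq_complex /= oppr0 !eqxx. Qed.

Lemma conj_sgnb b : conjc (sgnb R b) = sgnb R b.
Proof. by case: b; rewrite /sgnb /= ?expr0 ?expr1; apply/eqP; rewrite eq_complex /= ?oppr0 !eqxx. Qed.

Lemma conjX (u : C) k : conjc (u ^+ k) = conjc u ^+ k.
Proof.
elim: k => [|k IH]; last by rewrite !exprS conjM IH.
by rewrite !expr0; apply/eqP; rewrite eq_complex /= oppr0 !eqxx.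
Qed.

Lemma unitZ k b : (ze ^+ k * sgnb R b) * conjc (ze ^+ k * sgnb R b) = 1.
Proof.
rewrite conjM conjX conj_sgnb mulrACA -exprMn zz expr1n mul1r.
by case: b; rewrite /sgnb /= ?expr0 ?expr1 ?mulr1 ?mulrNN ?mulr1.
Qed.

Lemma conjs : conjc s = s.
Proof. exact: conjR. Qed.

Lemma amp23 (f g : bv n -> bool) x :
  A23_state R m (fun x => @dotF2 n x y) f g false x =
  s * (s * s ^+ n) * (ze ^+ wt (bvxor x y) * sgnb R (f (bvxor x y)) + ze ^+ wt x * sgnb R (g x)).
Proof.
rewrite /A23_state /H_drive big_bool /ctrl /on_reg /init_drive /=.
rewrite stage5 tensH_ket /oracle tensS /= /Hg /=.
have -> : sgnb R false = 1 by rewrite /sgnb expr0.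
ring.
Qed.

Lemma aa_gen (t Z1 Z2 : C) : conjc t = t -> Z1 * conjc Z1 = 1 -> Z2 * conjc Z2 = 1 ->
  t * (Z1 + Z2) * conjc (t * (Z1 + Z2)) = t * t * (2 + Z1 * conjc Z2 + conjc (Z1 * conjc Z2)).
Proof.
move=> ht h1 h2; rewrite !conjM conjD conjcK ht.
transitivity (t * t * (Z1 * conjc Z1 + Z2 * conjc Z2 + Z1 * conjc Z2 + conjc Z1 * Z2)); first ring.
by rewrite h1 h2; ring.
Qed.

Lemma part2 (f g : bv n -> bool) :
  prob_drive (A23_state R m (fun x => @dotF2 n x y) f g) false
    = (2 : R)^-1 * (1 + complex.Re (((2 : R) ^- n)%:C%C * zeta R m ^- wt y * crosscorr R m f g y)).
Proof.
rewrite /prob_drive.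
under eq_bigr do rewrite normc2_re amp23.
rewrite -Re_sum.
have ht : conjc (s * (s * s ^+ n)) = s * (s * s ^+ n) by rewrite !conjM conjX conjs.
under eq_bigr do rewrite aa_gen ?unitZ //.
rewrite -mulr_sumr !big_split /= sumr_const -conj_sum.
have KW : \sum_x ze ^+ wt (bvxor x y) * sgnb R (f (bvxor x y)) * conjc (ze ^+ wt x * sgnb R (g x))
   = ze ^- wt y * crosscorr R m f g y.
  rewrite -Klemma; apply: eq_bigr => x _; rewrite conjM conjX conj_sgnb -/(zetabar R m); ring.
rewrite KW.
have tt : s * (s * s ^+ n) * (s * (s * s ^+ n)) = ((2^-1 * 2^-1 * 2^-n : R)%:C)%C.
  transitivity (s * s * (s * s) * (s ^+ n * s ^+ n)); first ring.
  by rewrite s2 sn2 !rmorphM !fmorphV !rmorphXn !rmorph_nat.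
have nn : ((2 ^ n)%:R + (2 ^ n)%:R : C) = ((2 * 2 ^+ n : R)%:C)%C.
  by rewrite rmorphM rmorphXn rmorph_nat natrX; ring.
rewrite [#|_|]card_ffun card_bool card_ord nn tt ReRM !ReD ReJ ReR -(mulrA ((2 ^- n)%:C%C)) ReRM.
set K := complex.Re _.
field.
by rewrite expf_neq0 // pnatr_eq0.
Qed.

End Proof.

Theorem theorem8 (R : realType) (n m : nat) (f g : bv n -> bool) (y : bv n) :
  (0 < m)%N ->
  let h : bv n -> bool := fun x => dotF2 x y in
  prob_outcome (A33_state R m h f g) (bv0 n)
    = (2 : R) ^- (2 * n) * Normc.normc (crosscorr R m f g y) ^+ 2
  /\
  prob_drive (A23_state R m h f g) false
    = (2 : R)^-1 * (1 + complex.Re (((2 : R) ^- n)%:C%C * zeta R m ^- wt y * crosscorr R m f g y)).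
Proof.
move=> _ h; split; [exact: part1 | exact: part2].
Qed.
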